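(* Let $q$ be a power of an odd prime $p$, let $L(x)$ be an $\mathbb{F}_q$-linearized polynomial, and let $C$ denote the curve $y^q-y=xL(x)$. Let $n\ge1$ and let $\ell$ be a prime with $\gcd(\ell,2p)=1$. If $\lambda_n(C)\neq 0$ and $\lambda_{n\ell}(C)\neq 0$, then $$\lambda_n(C)\equiv \lambda_{n\ell}(C)\, q^{\frac{n(\ell-1)+w_{n\ell}(C)-w_n(C)}{2}} \pmod{\ell}.$$
   Context: An $\mathbb{F}_q$-linearized polynomial is $L(x)=\sum_i c_i x^{q^i}$ with $c_i\in\mathbb{F}_q$. For $m\ge1$, let $Q_m(x)=\mathrm{Tr}_{\mathbb{F}_{q^m}/\mathbb{F}_q}(xL(x))$, a quadratic form over $\mathbb{F}_q$ on $\mathbb{F}_{q^m}$; its radical is $\{x\in\mathbb{F}_{q^m}: Q_m(x+y)-Q_m(x)-Q_m(y)=0\ \forall y\in\mathbb{F}_{q^m}\}$ and $w_m(C)$ denotes its $\mathbb{F}_q$-dimension. The sign $\lambda_m(C)\in\{-1,0,1\}$ is defined by $\#\{x\in\mathbb{F}_{q^m}:Q_m(x)=0\}=q^{m-1}+\lambda_m(C)(q-1)q^{\frac{m+w_m(C)}{2}-1}$; equivalently $\#C(\mathbb{F}_{q^m})=q^m+1+\lambda_m(C)(q-1)q^{\frac{m+w_m(C)}{2}}$. One has $\lambda_m(C)=0$ iff $m-w_m(C)$ is odd. *)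

(* Defs.v *)
From HB Require Import structures.
From mathcomp Require Import all_boot all_order all_algebra all_field.
Set Implicit Arguments. Unset Strict Implicit. Unset Printing Implicit Defensive.
Import GRing.Theory.
Local Open Scope ring_scope.

(* Ambient finite field K (containing F_{q^m} for the relevant m).
   F_{q^m} is realised as the set of x in K with x^(q^m) = x. *)
Definition Fqm (K : finFieldType) (q m : nat) : {set K} :=
  [set x : K | x ^+ (q ^ m) == x].

Definition linpoly (K : finFieldType) (q : nat) (c : seq K) (x : K) : K :=
  \sum_(i < size c) c`_i * x ^+ (q ^ i).

(* Q_m(x) = Tr_{F_{q^m}/F_q}(x L(x)) = sum_{i<m} (x L(x))^(q^i). *)
Definition Qm (K : finFieldType) (q : nat) (c : seq K) (m : nat) (x : K) : K :=
  \sum_(i < m) (x * linpoly q c x) ^+ (q ^ i).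

Definition radicalQ (K : finFieldType) (q : nat) (c : seq K) (m : nat) : {set K} :=
  [set x in Fqm K q m |
     [forall y in Fqm K q m, Qm q c m (x + y) - Qm q c m x - Qm q c m y == 0]].

Definition nzeros (K : finFieldType) (q : nat) (c : seq K) (m : nat) : nat :=
  #|[set x in Fqm K q m | Qm q c m x == 0]|.

(* w is the F_q-dimension of the radical: #radical = q^w. *)
Definition is_w (K : finFieldType) (q : nat) (c : seq K) (m w : nat) : Prop :=
  #|radicalQ q c m| = (q ^ w)%N.

Definition is_lambda (K : finFieldType) (q : nat) (c : seq K) (m w : nat)
    (lam : int) : Prop :=
  (lam \in [:: -1; 0; 1]) /\
  ((nzeros q c m)%:Z = (q ^ m.-1)%N%:Z
      + lam * (q.-1)%:Z * (q ^ ((m + w) %/ 2).-1)%N%:Z).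

(* Main.v *)
Require Import Defs.
From HB Require Import structures.
From mathcomp Require Import all_boot all_order all_algebra all_field all_fingroup all_solvable.
From mathcomp Require Import ring zify lra.
Set Implicit Arguments. Unset Strict Implicit. Unset Printing Implicit Defensive.
Import GRing.Theory Num.Theory.
Local Open Scope ring_scope.

Lemma dvd_pred_exp a s : (0 < a)%N -> (a.-1 %| (a ^ s).-1)%N.
Proof.
move=> a0; elim: s => [|s IH]; first by rewrite expn0 dvdn0.
have hx : (0 < a ^ s)%N by rewrite expn_gt0 a0.
have -> : (a ^ s.+1).-1 = (a * (a ^ s).-1 + a.-1)%N.
  by rewrite expnS; move: hx a0; set x := (a ^ s)%N; move=> hx a0; nia.
by rewrite dvdn_add // dvdn_mull.
Qed.

Lemma card_roots (F : finFieldType) d : (1 < d)%N -> (d.-1 %| #|F|.-1)%N ->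
  #|[set x : F | x ^+ d == x]| = d.
Proof.
move=> d1 hdvd.
set P : {poly F} := 'X^d - 'X.
have hN : (1 < #|F|)%N by rewrite (cardD1 0) (cardD1 1) !inE oner_neq0.
have hP : P %| \prod_(x : F) ('X - x%:P).
  rewrite -finField_genPoly /P.
  have e1 : forall n, (0 < n)%N -> ('X^n - 'X : {poly F}) = 'X * ('X^(n.-1) - 1).
    by move=> n n0; rewrite mulrBr mulr1 -exprS prednK.
  rewrite e1 ?(ltnW d1) // e1 ?(ltnW hN) // dvdp_mul2l ?polyX_eq0 //.
  case/dvdnP: hdvd => s ->.
  rewrite mulnC exprM -(expr1n _ s) subrXX !expr1n; exact: dvdp_mulr (dvdpp _).
have [m Pm] := dvdp_prod_XsubC hP.
set s := mask m (index_enum F) in Pm.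
have us : uniq s by apply: mask_uniq; apply: index_enum_uniq.
have hs : [set x : F | x ^+ d == x] =i s.
  move=> x; rewrite inE -(root_prod_XsubC s x) -(eqp_root Pm) /root /P.
  by rewrite !hornerE subr_eq0.
rewrite (eq_card hs) (card_uniqP us).
have hX : size ('X^d : {poly F}) = d.+1 by exact: size_polyXn.
have hsz : size P = d.+1.
  rewrite /P size_polyDl hX //.
  by rewrite size_polyN size_polyX ltnS.
by have := eqp_size Pm; rewrite size_prod_XsubC hsz; case.
Qed.

Lemma alg_id (Qz X Y Z c0 c1 c2 S1 S2 lam : int) :
 Qz - 1 != 0 -> lam ^+ 2 = 1 ->
 c0 + S1 = Qz * X -> 2 * S1 = (Qz - 1) * (c1 + c2) ->
 c0 ^+ 2 + S2 = Z * (Qz * X) + (Qz * X - Z) * X ->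
 2 * S2 = (Qz - 1) * (c1 ^+ 2 + c2 ^+ 2) ->
 c0 = X + lam * (Qz - 1) * Y ->
 (c1 - c2) ^+ 2 = 4 * (Z * X - Qz * Y ^+ 2).
Proof.
move=> hq hl T1 E1 T2 E2 hc0.
have hS1 : S1 = Qz * X - c0 by rewrite -T1; ring.
have hS2 : S2 = Z * (Qz * X) + (Qz * X - Z) * X - c0 ^+ 2 by rewrite -T2; ring.
have s1 : c1 + c2 = 2 * (X - lam * Y).
  by apply: (mulfI hq); rewrite -E1 hS1 hc0; ring.
have s2 : c1 ^+ 2 + c2 ^+ 2 =
    2 * (Z * X + X ^+ 2 - 2 * lam * X * Y - lam ^+ 2 * (Qz - 1) * Y ^+ 2).
  by apply: (mulfI hq); rewrite -E2 hS2 hc0; ring.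
have -> : (c1 - c2) ^+ 2 = 2 * (c1 ^+ 2 + c2 ^+ 2) - (c1 + c2) ^+ 2 by ring.
rewrite s1 s2.
have -> : forall a : int, 2 * (2 * (Z * X + X ^+ 2 - 2 * lam * X * Y - a * (Qz - 1) * Y ^+ 2)) -
  (2 * (X - lam * Y)) ^+ 2 = 4 * (Z * X - a * Qz * Y ^+ 2) + 4 * (a - lam ^+ 2) * Y ^+ 2.
  by move=> a; ring.
by rewrite hl subrr mulr0 mul0r addr0 mul1r.
Qed.

Lemma no_sq_nat (E Q : nat) : (1 < Q)%N -> (E * E)%N != (Q * (Q - 1))%N.
Proof.
move=> hQ; apply/eqP => h.
case: (ltnP E Q) => hE.
  have : (E * E <= (Q - 1) * (Q - 1))%N by apply: leq_mul; lia.
  have : ((Q - 1) * (Q - 1) < Q * (Q - 1))%N by rewrite ltn_pmul2r; lia.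
  lia.
have : (Q * Q <= E * E)%N by apply: leq_mul.
have : (Q * (Q - 1) < Q * Q)%N by rewrite ltn_pmul2l; lia.
lia.
Qed.

Lemma no_sq (d : int) (Q P : nat) : (1 < Q)%N -> (0 < P)%N ->
  d ^+ 2 != 4 * (Posz ((Q * P) * (Q * P)) - Posz Q * Posz (P * P)).
Proof.
move=> hQ hP; apply/eqP => h.
have e : d ^+ 2 = Posz (((2 * P) * (2 * P)) * (Q * (Q - 1))).
  rewrite h !PoszM -subzn; last by lia.
  ring.
have := congr1 absz e; rewrite abszX /= => hD.
set D := `|d|%N in hD.
have hdv : (2 * P %| D)%N.
  by rewrite -(@dvdn_pexp2r _ _ 2) // hD mulnn dvdn_mulr.
case/dvdnP: hdv => E hE.
rewrite hE -mulnn in hD.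
have : (E * E)%N = (Q * (Q - 1))%N.
  apply/eqP; rewrite -(@eqn_pmul2l ((2 * P) * (2 * P))); last by rewrite muln_gt0; lia.
  by rewrite -hD; apply/eqP; ring.
by move/eqP; rewrite (negbTE (no_sq_nat E hQ)).
Qed.

Lemma aux_mw m w j : (0 < m)%N -> (m + w = j.*2.+1)%N -> (w + m.-1 = j.*2)%N.
Proof. lia. Qed.

Lemma aux_q2 (q i : nat) : (q ^ i.+1.*2)%N = ((q * q ^ i) * (q * q ^ i))%N.
Proof. by rewrite -expnS mulnn -expnM; congr expn; lia. Qed.

Lemma aux_neg (Q : nat) : (1 < Q)%N -> (0 <= 4 * (1 - Posz Q) :> int) -> False.
Proof. lia. Qed.

Lemma orbit_gen (T : finType) (f : T -> T) (finj : injective f) (l : nat) (S : {set T}) :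
  prime l -> (forall x, iter l f x = x) -> (forall x, (f x \in S) = (x \in S)) ->
  #|S| = #|[set x in S | f x == x]| %[mod l].
Proof.
move=> pl hl hS.
pose pi := perm finj.
have hpow : forall j x, (pi ^+ j)%g x = iter j f x.
  elim=> [|j IH] x; first by rewrite expg0 perm1.
  by rewrite expgSr permM IH permE.
have hG : pgroup l <[pi]>%g.
  apply: (@pnat_dvd _ l); last exact: pnat_id.
  rewrite -/(#[pi]%g) order_dvdn; apply/eqP/permP => x.
  by rewrite hpow perm1.
have hact : [acts <[pi]>%g, on S | 'P].
  rewrite cycle_subG; apply/astabsP => x /=.
  by rewrite /aperm permE.
rewrite (pgroup_fix_mod hG hact); congr (_ %% _)%N.
apply: eq_card => x; rewrite in_setI afix_cycle !in_set.
by rewrite sub1set in_set /= /aperm permE.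
Qed.

Lemma aux_exp n l wn wnl : (1 < l)%N -> (wn <= n)%N -> ~~ odd (n + wn) -> ~~ odd (n * l + wnl) ->
  ((n * l + wnl) %/ 2 = (n + wn) %/ 2 + (n * (l - 1) + wnl - wn) %/ 2)%N.
Proof.
move=> l1 hw h1 h2.
have e1 := odd_double_half (n + wn); rewrite (negbTE h1) add0n -muln2 -divn2 in e1.
have e2 := odd_double_half (n * l + wnl); rewrite (negbTE h2) add0n -muln2 -divn2 in e2.
have e3 : (n * (l - 1) = n * l - n)%N by rewrite mulnBr muln1.
have e4 : (n * 2 <= n * l)%N by rewrite leq_mul2l l1 orbT.
rewrite e3; set N := (n * l)%N in e2 e4 *.
lia.
Qed.

Lemma aux_be n wn : (1 <= n)%N -> ~~ odd (n + wn) -> (0 < (n + wn) %/ 2)%N.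
Proof.
move=> n1 h; have e1 := odd_double_half (n + wn).
rewrite (negbTE h) add0n -muln2 -divn2 in e1; lia.
Qed.

Section Basic.
Variables (K : finFieldType) (p k : nat) (c : seq K).
Hypotheses (pr_p : prime p) (odd_p : odd p) (k_gt0 : (0 < k)%N)
  (chK : p \in [pchar K])
  (hc : forall i, (i < size c)%N -> c`_i ^+ (p ^ k) = c`_i).

Local Notation q := (p ^ k)%N.
Local Notation Fq := (Fqm K q 1).
Local Notation V m := (Fqm K q m).
Local Notation L := (linpoly q c).

Lemma q_gt1 : (1 < q)%N.
Proof. by rewrite -(expn0 p) ltn_exp2l ?prime_gt1. Qed.

Lemma q_gt0 j : (0 < q ^ j)%N.
Proof. by rewrite expn_gt0 (ltn_trans _ q_gt1). Qed.

Lemma qnat j : ([pchar K]).-nat (q ^ j)%N.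
Proof. by rewrite (eq_pnat _ (pcharf_eq chK)) -expnM pnatX pnat_id. Qed.

Lemma frobD j (x y : K) : (x + y) ^+ (q ^ j)%N = x ^+ (q ^ j)%N + y ^+ (q ^ j)%N.
Proof. exact: exprDn_pchar (qnat j). Qed.

Lemma frob0 j : (0 : K) ^+ (q ^ j)%N = 0.
Proof. by rewrite expr0n eqn0Ngt q_gt0. Qed.

Lemma frobN j (x : K) : (- x) ^+ (q ^ j)%N = - x ^+ (q ^ j)%N.
Proof.
apply/eqP; rewrite -subr_eq0 opprK -frobD addNr frob0 //.
Qed.

Lemma frob_sum j (I : Type) (r : seq I) (P : pred I) (F : I -> K) :
  (\sum_(i <- r | P i) F i) ^+ (q ^ j)%N = \sum_(i <- r | P i) F i ^+ (q ^ j)%N.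
Proof. exact: (big_morph (fun x : K => x ^+ (q ^ j)%N) (frobD j) (frob0 j)). Qed.

Lemma frobF i j (x : K) : x ^+ (q ^ i)%N ^+ (q ^ j)%N = x ^+ (q ^ (i + j))%N.
Proof. by rewrite -exprM expnD. Qed.

Lemma frobC i j (x : K) : x ^+ (q ^ i)%N ^+ (q ^ j)%N = x ^+ (q ^ j)%N ^+ (q ^ i)%N.
Proof. by rewrite !frobF addnC. Qed.

Lemma inV m (x : K) : (x \in V m) = (x ^+ (q ^ m)%N == x).
Proof. by rewrite inE. Qed.

Lemma Fq_pow j (t : K) : t \in Fq -> t ^+ (q ^ j)%N = t.
Proof.
rewrite inV expn1 => /eqP ht; elim: j => [|j IH]; first by rewrite expn0 expr1.
by rewrite expnSr exprM IH.
Qed.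

Lemma V_pow m j (x : K) : x \in V m -> x ^+ (q ^ (m * j))%N = x.
Proof.
rewrite inV => /eqP hx; elim: j => [|j IH]; first by rewrite muln0 expn0 expr1.
by rewrite mulnS expnD exprM hx IH.
Qed.

Lemma V_sub m j (x : K) : x \in V m -> x \in V (m * j).
Proof. by move=> hx; rewrite inV V_pow. Qed.

Lemma FqV m t : t \in Fq -> t \in V m.
Proof. by move=> ht; rewrite inV Fq_pow. Qed.

Lemma VD m x y : x \in V m -> y \in V m -> x + y \in V m.
Proof. by rewrite !inV frobD => /eqP -> /eqP ->. Qed.
Lemma VM m x y : x \in V m -> y \in V m -> x * y \in V m.
Proof. by rewrite !inV exprMn => /eqP -> /eqP ->. Qed.
Lemma VN m x : x \in V m -> - x \in V m.
Proof. by rewrite !inV frobN => /eqP ->. Qed.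
Lemma VB m x y : x \in V m -> y \in V m -> x - y \in V m.
Proof. by move=> hx hy; rewrite VD ?VN. Qed.
Lemma VV m x : x \in V m -> x^-1 \in V m.
Proof. by rewrite !inV exprVn => /eqP ->. Qed.
Lemma V1 m : (1 : K) \in V m.
Proof. by rewrite inV expr1n. Qed.
Lemma V0 m : (0 : K) \in V m.
Proof. by rewrite inV frob0. Qed.
Lemma Vnat m j : (j%:R : K) \in V m.
Proof. elim: j => [|j IH]; first exact: V0. by rewrite -addn1 natrD VD ?V1. Qed.
Lemma Vfrob m j x : x \in V m -> x ^+ (q ^ j)%N \in V m.
Proof. by rewrite !inV frobC => /eqP ->. Qed.

Lemma c_Fq i : c`_i \in Fq.
Proof.
case: (ltnP i (size c)) => hi; first by rewrite inV expn1 hc.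
by rewrite nth_default // V0.
Qed.

Lemma L_add x y : L (x + y) = L x + L y.
Proof. by rewrite /linpoly -big_split; apply: eq_bigr => i _; rewrite frobD mulrDr. Qed.

Lemma L_scale t x : t \in Fq -> L (t * x) = t * L x.
Proof.
move=> ht; rewrite /linpoly mulr_sumr; apply: eq_bigr => i _.
by rewrite exprMn (Fq_pow _ ht) mulrCA.
Qed.

Lemma L_frob j x : L x ^+ (q ^ j)%N = L (x ^+ (q ^ j)%N).
Proof.
rewrite /linpoly frob_sum; apply: eq_bigr => i _.
by rewrite exprMn (Fq_pow _ (c_Fq _)) frobC.
Qed.

Lemma L_V m x : x \in V m -> L x \in V m.
Proof. by rewrite !inV L_frob => /eqP ->. Qed.


Definition tr m (y : K) := \sum_(i < m) y ^+ (q ^ i)%N.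
Local Notation Q m := (Qm q c m).

Lemma QmE m x : Q m x = tr m (x * L x).
Proof. by []. Qed.

Lemma tr_add m y z : tr m (y + z) = tr m y + tr m z.
Proof. by rewrite /tr -big_split; apply: eq_bigr => i _; rewrite frobD. Qed.

Lemma tr_scale m t y : t \in Fq -> tr m (t * y) = t * tr m y.
Proof.
move=> ht; rewrite /tr mulr_sumr; apply: eq_bigr => i _.
by rewrite exprMn (Fq_pow _ ht).
Qed.

Lemma tr_frob m j y : tr m y ^+ (q ^ j)%N = tr m (y ^+ (q ^ j)%N).
Proof. by rewrite /tr frob_sum; apply: eq_bigr => i _; rewrite frobC. Qed.

Lemma tr_Fq m y : y \in V m -> tr m y \in Fq.
Proof.
move=> hy; rewrite inV; have := tr_frob m 1 y; rewrite expn1 => ->.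
apply/eqP; case: m hy => [|m] hy; first by rewrite /tr !big_ord0.
rewrite /tr big_ord_recr big_ord_recl /= addrC; congr (_ + _).
  by rewrite -exprM -expnS; move: hy; rewrite inV => /eqP ->; rewrite expn0 expr1.
by apply: eq_bigr => i _; rewrite -exprM -expnS.
Qed.

Lemma tr_mul n j y : y \in V n -> tr (n * j) y = j%:R * tr n y.
Proof.
move=> hy; elim: j => [|j IH]; first by rewrite muln0 /tr big_ord0 mul0r.
rewrite mulnS /tr big_split_ord /=.
have -> : \sum_(i < n * j) y ^+ (q ^ (n + i))%N = tr (n * j) y.
  by apply: eq_bigr => i _; rewrite expnD exprM; move: hy; rewrite inV => /eqP ->.
by rewrite IH -addn1 natrD mulrDl mul1r addrC.
Qed.

Lemma Q_Fq m x : x \in V m -> Q m x \in Fq.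
Proof. by move=> hx; apply: tr_Fq; rewrite VM ?L_V. Qed.

Lemma Q_scale m t x : t \in Fq -> Q m (t * x) = t ^+ 2 * Q m x.
Proof.
move=> ht; rewrite !QmE L_scale // -tr_scale; last by rewrite VM.
by congr tr; ring.
Qed.

Lemma Q_frob m j x : Q m (x ^+ (q ^ j)%N) = Q m x ^+ (q ^ j)%N.
Proof. by rewrite !QmE -L_frob -exprMn tr_frob. Qed.

Definition B m u v := Q m (u + v) - Q m u - Q m v.

Lemma B_exp m u v : B m u v = tr m (u * L v + v * L u).
Proof.
rewrite /B !QmE L_add.
have -> : (u + v) * (L u + L v) = u * L u + v * L v + (u * L v + v * L u) by ring.
rewrite !tr_add; ring.
Qed.

Lemma B_add m u v w : B m u (v + w) = B m u v + B m u w.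
Proof. by rewrite !B_exp L_add -tr_add; congr tr; ring. Qed.

Lemma B_scale m u t v : t \in Fq -> B m u (t * v) = t * B m u v.
Proof. by move=> ht; rewrite !B_exp L_scale // -tr_scale //; congr tr; ring. Qed.

Lemma B_Fq m u v : u \in V m -> v \in V m -> B m u v \in Fq.
Proof. by move=> hu hv; rewrite B_exp tr_Fq // VD ?VM ?L_V. Qed.

Lemma Q_N m x : Q m (- x) = Q m x.
Proof.
by rewrite -mulN1r Q_scale ?VN ?V1 // sqrrN expr1n mul1r.
Qed.

Lemma Q_diff m u v : Q m (u + v) - Q m (u - v) = 2%:R * B m u v.
Proof.
have h1 : Q m (u + v) = B m u v + Q m u + Q m v by rewrite /B; ring.
have h2 : Q m (u - v) = - B m u v + Q m u + Q m v.
  have -> : - B m u v = B m u (- v).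
    by rewrite -[in LHS]mulN1r -B_scale ?VN ?V1 // mulN1r.
  by rewrite -[Q m v]Q_N /B; ring.
by rewrite h1 h2; ring.
Qed.


Variables (n l e : nat).
Hypothesis hK : #|K| = ((q ^ (n * l)) ^ e)%N.

Lemma card_V m : (0 < m)%N -> (m %| n * l)%N -> #|V m| = (q ^ m)%N.
Proof.
move=> m0 /dvdnP[t ht]; rewrite /Fqm card_roots //.
  by rewrite -(expn0 q) ltn_exp2l ?q_gt1.
rewrite hK; have -> : ((q ^ (n * l)) ^ e = (q ^ m) ^ (t * e))%N.
  by rewrite ht -!expnM; congr (_ ^ _)%N; lia.
by rewrite dvd_pred_exp ?q_gt0.
Qed.

Lemma card_Fq : #|Fq| = q.
Proof. by rewrite card_V ?dvd1n // expn1. Qed.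

Lemma two_neq0 : (2%:R : K) != 0.
Proof.
rewrite -(dvdn_pcharf chK); apply/negP => /dvdn_leq => /(_ isT) hp2.
have hp1 := prime_gt1 pr_p.
have : p = 2%N by apply/eqP; rewrite eqn_leq hp2 hp1.
by move=> hp; move: odd_p; rewrite hp.
Qed.

Local Notation Fqx := (Fq :\ 0).

Lemma inFqx t : (t \in Fqx) = (t != 0) && (t \in Fq).
Proof. by rewrite in_setD1. Qed.

Lemma card_Fqx : #|Fqx| = q.-1.
Proof. have := cardsD1 0 Fq; rewrite V0 card_Fq /= => h; by rewrite [in RHS]h add1n. Qed.

Lemma Fqx_sq t b : t \in Fqx -> b \in Fqx -> t ^+ 2 * b \in Fqx.
Proof.
rewrite !inFqx => /andP[t0 tF] /andP[b0 bF].
by rewrite mulf_neq0 ?expf_neq0 // VM // VM.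
Qed.

Definition cls b a := #|[set t in Fqx | t ^+ 2 * b == a]|.

Lemma sum_cls_h (h : K -> nat) b : b \in Fqx ->
  (\sum_(t in Fqx) h ((t ^+ 2 * b)%R) = \sum_(a in Fqx) h a * cls b a)%N.
Proof.
move=> hb.
rewrite (partition_big (fun t => t ^+ 2 * b) (mem Fqx)) => [|t ht]; last exact: Fqx_sq.
apply: eq_bigr => a ha.
transitivity (\sum_(t in [set t in Fqx | (t ^+ 2 * b)%R == a]) h a)%N.
  by apply: eq_big => [t|t]; rewrite ?inE // => /andP[_ /eqP ->].
by rewrite sum_nat_const mulnC.
Qed.

Lemma cls_sum b : b \in Fqx -> (\sum_(a in Fqx) cls b a)%N = q.-1.
Proof.
move=> hb; have := sum_cls_h (fun _ => 1%N) hb.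
rewrite sum_nat_const card_Fqx muln1 => ->.
by apply: eq_bigr => a _; rewrite mul1n.
Qed.

Lemma cls_witness b a : cls b a != 0%N -> exists2 s, s \in Fqx & s ^+ 2 * b = a.
Proof.
rewrite cards_eq0 => /set0Pn[s]; rewrite inE => /andP[hs /eqP E].
by exists s.
Qed.

Lemma cls_two b a s : b \in Fqx -> s \in Fqx -> s ^+ 2 * b = a -> cls b a = 2%N.
Proof.
move=> hb hs E.
have b0 : b != 0 by move: hb; rewrite inFqx => /andP[].
have s0 : s != 0 by move: hs; rewrite inFqx => /andP[].
have hns : - s \in Fqx by move: hs; rewrite !inFqx oppr_eq0 => /andP[-> /VN ->].
rewrite /cls; have -> : [set t in Fqx | t ^+ 2 * b == a] = [set s; - s].
  apply/setP => t; rewrite in_set in_set2 -E; apply/idP/idP.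
    case/andP=> _ /eqP /(mulIf b0) /eqP; rewrite -subr_eq0 subr_sqr mulf_eq0.
    by rewrite subr_eq0 addr_eq0.
  case/orP => /eqP ->; first by rewrite hs eqxx.
  by rewrite hns sqrrN eqxx.
rewrite cards2; suff -> : s != - s by []; apply/eqP => hss.
have : 2%:R * s == 0 by rewrite mulr_natl mulr2n {2}hss subrr.
by rewrite mulf_eq0 (negbTE two_neq0) (negbTE s0).
Qed.

Lemma cls_02 b a : b \in Fqx -> cls b a = 0%N \/ cls b a = 2%N.
Proof.
move=> hb; case: (eqVneq (cls b a) 0%N) => [->|/cls_witness[s hs E]]; first by left.
by right; apply: cls_two hs E.
Qed.

Lemma one_Fqx : 1 \in Fqx.
Proof. by rewrite inFqx oner_neq0 V1. Qed.

Lemma nonsquare : exists2 nu, nu \in Fqx & forall t, t \in Fq -> t ^+ 2 != nu.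
Proof.
case: (pickP [pred a | (a \in Fqx) && (cls 1 a == 0%N)]) => [a /andP[ha /eqP h0] | none].
  exists a => // t ht; apply/eqP => E.
  have t0 : t != 0.
    by apply/eqP => t0; move: ha; rewrite -E t0 expr0n inFqx eqxx.
  move: h0; rewrite /cls => /eqP; rewrite cards_eq0 => /eqP/setP/(_ t).
  by rewrite in_set inFqx t0 ht mulr1 E eqxx in_set0.
have := cls_sum one_Fqx.
rewrite (eq_bigr (fun _ => 2%N)) => [|a ha]; last first.
  have := none a; rewrite /= ha /= => /negbT h.
  by case: (cls_02 a one_Fqx) => // E; rewrite E in h.
rewrite sum_nat_const card_Fqx => h.
have := q_gt1; move: h; set r := q.-1; move=> h; lia.
Qed.

Lemma cls_pair nu a : nu \in Fqx -> (forall t, t \in Fq -> t ^+ 2 != nu) ->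
  a \in Fqx -> (cls 1 a + cls nu a)%N = 2%N.
Proof.
move=> hnu nsq ha.
have le2 : forall a, a \in Fqx -> (cls 1 a + cls nu a <= 2)%N.
  move=> b hb.
  case: (cls_02 b one_Fqx) => e1; case: (cls_02 b hnu) => e2; rewrite e1 e2 //.
  exfalso.
  have := (cls_witness (b := 1) (a := b)); rewrite e1 => /(_ isT)[s hs es].
  have := (cls_witness (b := nu) (a := b)); rewrite e2 => /(_ isT)[r hr er].
  have r0 : r != 0 by move: hr; rewrite inFqx => /andP[].
  move: hs hr; rewrite !inFqx => /andP[_ sF] /andP[_ rF].
  have := nsq (s / r) (VM sF (VV rF)); rewrite expr_div_n.
  by rewrite -er mulr1 in es; rewrite es mulrC mulKf ?expf_neq0 ?eqxx.
have tot : (\sum_(b in Fqx) (cls 1 b + cls nu b) = \sum_(b in Fqx) 2)%N.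
  rewrite big_split /= !cls_sum ?one_Fqx // (eq_bigr (fun _ => 2%N)) // sum_nat_const card_Fqx; lia.
apply/eqP; rewrite eqn_leq le2 //=.
have : (\sum_(b in Fqx) 2 <= \sum_(b in Fqx) (cls 1 b + cls nu b))%N by rewrite tot.
rewrite (bigD1 a) //= [X in (_ <= X)%N](bigD1 a) //=.
have : (\sum_(i in Fqx | i != a) (cls 1 i + cls nu i) <= \sum_(i in Fqx | i != a) 2)%N.
  by apply: leq_sum => b /andP[hb _]; apply: le2.
move=> h1 h2; set X := (cls 1 a + cls nu a)%N in h2 *; set A := (\sum_(i in Fqx | i != a) (cls 1 i + cls nu i))%N in h1 h2; set B := (\sum_(i in Fqx | i != a) 2)%N in h1 h2; lia.
Qed.

Lemma class_sum (h : K -> nat) nu : nu \in Fqx -> (forall t, t \in Fq -> t ^+ 2 != nu) ->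
  (forall t a, t \in Fqx -> a \in Fqx -> h (t ^+ 2 * a) = h a) ->
  (2 * \sum_(a in Fqx) h a = q.-1 * (h 1%R + h nu))%N.
Proof.
move=> hnu nsq hh.
have e1 := sum_cls_h h one_Fqx; have e2 := sum_cls_h h hnu.
rewrite (eq_bigr (fun t => h 1)) in e1 => [|t ht]; last by rewrite hh ?one_Fqx.
rewrite (eq_bigr (fun t => h nu)) in e2 => [|t ht]; last by rewrite hh.
rewrite !sum_nat_const card_Fqx in e1 e2.
rewrite mulnDr e1 e2 -big_split /= mulnC big_distrl /=.
by apply: eq_bigr => a ha; rewrite -mulnDr cls_pair.
Qed.

Definition cnt (F : K -> K) m a := #|[set x in V m | F x == a]|.

Lemma cnt_scale F m t a :
  (forall t x, t \in Fq -> x \in V m -> F (t * x) = t ^+ 2 * F x) ->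
  t \in Fqx -> cnt F m (t ^+ 2 * a) = cnt F m a.
Proof.
move=> hF ht; have t0 : t != 0 by move: ht; rewrite inFqx => /andP[].
have tF : t \in Fq by move: ht; rewrite inFqx => /andP[].
rewrite /cnt -[RHS](card_imset _ (mulfI t0)); apply: eq_card => y; rewrite in_set.
apply/andP/imsetP.
  case=> hy /eqP Fy; exists (t^-1 * y).
    have tiF : t^-1 \in Fq by apply: VV.
    rewrite in_set (VM (FqV _ tiF) hy) /= hF // Fy exprVn mulrA mulVf ?mul1r //.
    by rewrite expf_neq0.
  by rewrite mulrA mulfV // mul1r.
case=> x; rewrite in_set => /andP[hx /eqP Fx] ->.
by rewrite (VM (FqV _ tF) hx) hF // Fx.
Qed.

Lemma cnt_total F m : (forall x, x \in V m -> F x \in Fq) ->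
  (\sum_(a in Fq) cnt F m a)%N = #|V m|.
Proof.
move=> hF; rewrite -sum1_card [RHS](partition_big F (mem Fq)) /=; last exact: hF.
apply: eq_bigr => a _; rewrite /cnt -sum1_card.
by apply: eq_bigl => x; rewrite in_set.
Qed.

Lemma sum_Fqx (h : K -> nat) : (\sum_(a in Fq) h a = h 0%R + \sum_(a in Fqx) h a)%N.
Proof.
rewrite (bigD1 0) ?V0 //=; congr (_ + _)%N.
by apply: eq_bigl => a; rewrite inFqx andbC.
Qed.

Lemma card_pairs (A : {set K}) (R : K -> K -> bool) :
  #|[set z : K * K | (z.1 \in A) && R z.1 z.2]| = (\sum_(x in A) #|[set y | R x y]|)%N.
Proof.
rewrite -sum1dep_card; transitivity (\sum_(x in A) \sum_(y | R x y) 1)%N; last by apply: eq_bigr => x _; rewrite sum1dep_card.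
by rewrite pair_big_dep.
Qed.

Lemma cnt_sq F m : (forall x, x \in V m -> F x \in Fq) ->
  (\sum_(a in Fq) cnt F m a ^ 2)%N =
  #|[set z : K * K | (z.1 \in V m) && ((z.2 \in V m) && (F z.1 == F z.2))]|.
Proof.
move=> hF; rewrite (card_pairs (V m) (fun x y => (y \in V m) && (F x == F y))).
rewrite [RHS](eq_bigr (fun x => cnt F m (F x))) => [|x hx]; last first.
  by rewrite /cnt; apply: eq_card => y; rewrite !inE (eq_sym (F x)).
rewrite [RHS](partition_big F (mem Fq)) /=; last exact: hF.
apply: eq_bigr => a _.
transitivity (\sum_(x in [set x in V m | F x == a]) cnt F m a)%N; last first.
  by apply: eq_big => [x|x]; rewrite ?in_set // => /andP[_ /eqP ->].
by rewrite sum_nat_const mulnn.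
Qed.

Lemma pairs_B m :
  #|[set z : K * K | (z.1 \in V m) && ((z.2 \in V m) && (Q m z.1 == Q m z.2))]| =
  #|[set z : K * K | (z.1 \in V m) && ((z.2 \in V m) && (B m z.1 z.2 == 0))]|.
Proof.
pose phi := fun z : K * K => (z.1 + z.2, z.1 - z.2).
have two0 := two_neq0.
have inj : injective phi.
  move=> [u v] [u' v'] [h1 h2].
  have hu : u = u'.
    apply: (mulfI two0).
    have -> : 2%:R * u = (u + v) + (u - v) by ring.
    by rewrite h1 h2; ring.
  by move: h1; rewrite hu => /addrI ->.
rewrite -[RHS](card_imset _ inj); apply: eq_card => [[x y]]; rewrite in_set /=.
apply/idP/imsetP.
  case/and3P=> hx hy /eqP hQ.
  have h2V : (2%:R : K)^-1 \in V m by rewrite VV ?Vnat.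
  have e1 : (x + y) / 2%:R + (x - y) / 2%:R = x by field.
  have e2 : (x + y) / 2%:R - (x - y) / 2%:R = y by field.
  exists ((x + y) / 2%:R, (x - y) / 2%:R); last first.
    by rewrite /phi /=; congr (_, _); [exact: (esym e1) | exact: (esym e2)].
  have hu : (x + y) / 2%:R \in V m := VM (VD hx hy) h2V.
  have hv : (x - y) / 2%:R \in V m := VM (VB hx hy) h2V.
  rewrite in_set /= hu hv /=.
  have := Q_diff m ((x + y) / 2%:R) ((x - y) / 2%:R); rewrite e1 e2 hQ subrr.
  by move/esym/eqP; rewrite mulf_eq0 (negbTE two0).
case=> [[u v]]; rewrite in_set /= => /and3P[hu hv /eqP hB] [-> ->].
apply/and3P; split; [exact: VD hu hv | exact: VB hu hv | ]; apply/eqP; apply/eqP; rewrite -subr_eq0 Q_diff hB mulr0 //.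
Qed.

Lemma B_opp m u v : B m u (- v) = - B m u v.
Proof. by rewrite -[- v]mulN1r B_scale ?VN ?V1 // mulN1r. Qed.

Lemma radP m u : (u \in radicalQ q c m) = (u \in V m) && [forall y in V m, B m u y == 0].
Proof. by rewrite /radicalQ in_set. Qed.

Lemma ker_card m u : (0 < m)%N -> (m %| n * l)%N -> u \in V m ->
  (exists2 y, y \in V m & B m u y != 0) ->
  #|[set v | (v \in V m) && (B m u v == 0)]| = (q ^ m.-1)%N.
Proof.
move=> m0 hm hu [y hy hb].
have bF : B m u y \in Fq by apply: B_Fq.
have Fib : forall a, a \in Fq -> cnt (B m u) m a = cnt (B m u) m 0.
  move=> a ha.
  have abF : a / B m u y \in Fq by rewrite VM ?VV.
  set v0 := a / B m u y * y.
  have hv0 : v0 \in V m by rewrite VM // FqV.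
  have Bv0 : B m u v0 = a by rewrite B_scale // divfK.
  rewrite /cnt -[RHS](card_imset _ (addrI v0)); apply: eq_card => z; rewrite in_set.
  apply/andP/imsetP.
    case=> hz /eqP Bz; exists (z - v0); last by rewrite addrC subrK.
    by rewrite in_set (VB hz hv0) /= B_add B_opp Bz Bv0 subrr.
  case=> x; rewrite in_set => /andP[hx /eqP Bx] ->.
  by rewrite (VD hv0 hx) B_add Bx Bv0 addr0.
have tot := cnt_total (F := B m u) (m := m) (fun x hx => B_Fq hu hx).
rewrite (eq_bigr (fun _ => cnt (B m u) m 0)) in tot; last by move=> a ha; apply: Fib.
rewrite sum_nat_const card_Fq card_V // in tot.
rewrite -/(cnt (B m u) m 0).
apply/eqP; rewrite -(eqn_pmul2l (q_gt0 1)) expn1 tot -expnS prednK //.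
Qed.

Lemma second_moment m w : (0 < m)%N -> (m %| n * l)%N -> is_w q c m w ->
  (\sum_(a in Fq) cnt (Q m) m a ^ 2)%N = (q ^ w * q ^ m + (q ^ m - q ^ w) * q ^ m.-1)%N.
Proof.
move=> m0 hm hw.
rewrite cnt_sq; last by move=> x; exact: Q_Fq.
rewrite pairs_B (card_pairs (V m) (fun x y => (y \in V m) && (B m x y == 0))).
set Rd := radicalQ q c m.
have sub : Rd \subset V m by apply/subsetP => x; rewrite radP => /andP[].
rewrite (big_setID Rd) /= (setIidPr sub).
rewrite (eq_bigr (fun _ => q ^ m)%N) => [|u hu]; last first.
  move: hu; rewrite radP => /andP[hu /forall_inP hall].
  rewrite -(card_V m0 hm); apply: eq_card => v; rewrite in_set.
  by case hv: (v \in V m) => //=; apply: hall.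
rewrite [X in (_ + X)%N](eq_bigr (fun _ => q ^ m.-1)%N) => [|u]; last first.
  rewrite in_setD => /andP[nR hu]; apply: ker_card => //.
  move: nR; rewrite radP hu /= => /forall_inPn[y hy hb].
  by exists y.
rewrite !sum_nat_const cardsD (setIidPr sub) card_V // hw.
done.
Qed.

Lemma parity m w lam : (0 < m)%N -> (m %| n * l)%N -> is_w q c m w ->
  is_lambda q c m w lam -> lam != 0 -> ~~ odd (m + w).
Proof.
move=> m0 hm hw [hl hz] l0.
have [nu hnu nsq] := nonsquare.
pose cn := cnt (Q m) m.
have hsc : forall t a, t \in Fqx -> a \in Fqx -> cn (t ^+ 2 * a) = cn a.
  by move=> t a ht _; apply: cnt_scale => // t' x ht' _; apply: Q_scale.
have E1 := class_sum (h := cn) hnu nsq hsc.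
have E2 := class_sum (h := fun a => (cn a ^ 2)%N) (nu := nu) hnu nsq
  (fun t a ht ha => congr1 (fun x => x ^ 2)%N (hsc t a ht ha)).
have T1 := cnt_total (F := Q m) (m := m) (fun x hx => Q_Fq hx).
rewrite sum_Fqx card_V // in T1.
have T2 := second_moment m0 hm hw; rewrite sum_Fqx in T2.
have hle : (q ^ w <= q ^ m)%N.
  rewrite -hw -(card_V m0 hm); apply: subset_leq_card.
  by apply/subsetP => x; rewrite radP => /andP[].
have lam2 : lam ^+ 2 = 1.
  by move: hl l0; rewrite !inE => /or3P[] /eqP -> //.
have hq1 : Posz q - 1 != 0 by have := q_gt1; lia.
set S1 := (\sum_(a in Fqx) cn a)%N in E1.
set S2 := (\sum_(a in Fqx) cn a ^ 2)%N in E2.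
have I1 : Posz (cn 0) + Posz S1 = Posz q * Posz (q ^ m.-1).
  by rewrite -PoszD -PoszM -expnS prednK //; congr Posz; exact: T1.
have hq1' : Posz q - 1 = Posz q.-1 by rewrite (subzn (ltnW q_gt1)) subn1.
have I2 : 2 * Posz S1 = (Posz q - 1) * (Posz (cn 1) + Posz (cn nu)).
  by rewrite hq1' -PoszD -!PoszM; congr Posz; exact: E1.
have I3 : Posz (cn 0) ^+ 2 + Posz S2 = Posz (q ^ w) * (Posz q * Posz (q ^ m.-1))
    + (Posz q * Posz (q ^ m.-1) - Posz (q ^ w)) * Posz (q ^ m.-1).
  rewrite -PoszM -expnS prednK // subzn // -!PoszM -PoszD -PoszD.
  by congr Posz; rewrite mulnn; exact: T2.
have I4 : 2 * Posz S2 = (Posz q - 1) * (Posz (cn 1) ^+ 2 + Posz (cn nu) ^+ 2).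
  rewrite hq1' !expr2 -!PoszM; congr Posz; rewrite !mulnn; exact: E2.
have I5 : Posz (cn 0) = Posz (q ^ m.-1) + lam * (Posz q - 1) * Posz (q ^ ((m + w) %/ 2).-1).
  by rewrite hq1'; exact: hz.
have key := alg_id hq1 lam2 I1 I2 I3 I4 I5.
apply/negP => hodd.
set j := ((m + w) %/ 2)%N in key.
have hmw : (m + w = j.*2.+1)%N.
  by rewrite /j divn2 -[LHS]odd_double_half hodd.
have hZX : (Posz (q ^ w) * Posz (q ^ m.-1) = Posz (q ^ j.*2))%R.
  by rewrite -PoszM -expnD (aux_mw m0 hmw).
rewrite hZX in key.
clear hZX; case: j hmw key => [|i] hmw key.
  rewrite expn0 /= expr1n mulr1 in key.
  have := sqr_ge0 (Posz (cn 1) - Posz (cn nu)); rewrite key.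
  exact: aux_neg q_gt1.
have := no_sq (Posz (cn 1) - Posz (cn nu)) q_gt1 (q_gt0 i).
rewrite key /= aux_q2.
by rewrite expr2 -PoszM eqxx.
Qed.



Lemma frob_inj j : injective (fun x : K => x ^+ (q ^ j)%N).
Proof.
move=> x y /= h; apply/eqP; rewrite -subr_eq0.
have : (x - y) ^+ (q ^ j)%N == 0 by rewrite frobD frobN h subrr.
by rewrite expf_eq0 q_gt0.
Qed.

Lemma Q_nl x : x \in V n -> Q (n * l) x = l%:R * Q n x.
Proof. by move=> hx; rewrite !QmE tr_mul // VM ?L_V. Qed.

Lemma orbit_mod a : prime l ->
  cnt (Q (n * l)) (n * l) a = cnt (Q (n * l)) n a %[mod l].
Proof.
move=> pl.
pose f x := if x \in V (n * l) then x ^+ (q ^ n)%N else x.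
have finj : injective f.
  move=> x y; rewrite /f; case hx: (x \in V (n * l)); case hy: (y \in V (n * l)).
  - exact: frob_inj.
  - by move=> h; rewrite -h Vfrob in hy.
  - by move=> h; rewrite h Vfrob in hx.
  - by [].
have hit : forall j x, iter j f x = if x \in V (n * l) then x ^+ (q ^ (n * j))%N else x.
  elim=> [|j IH] x /=; first by rewrite muln0 expn0 expr1; case: ifP.
  rewrite IH /f; case hx: (x \in V (n * l)); last by rewrite hx.
  by rewrite Vfrob // frobF mulnS addnC.
have := orbit_gen finj (S := [set x in V (n * l) | Q (n * l) x == a]) pl.
move=> /(_ _ _) ->.
- congr (_ %% _)%N; apply: eq_card => x; rewrite !in_set -!inV /f.
  case hx: (x \in V (n * l)) => /=; last first.
    by case hxn: (x \in V n) => //; move: hx; rewrite V_sub.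
  by rewrite -inV andbC.
- by move=> x; rewrite hit; case hx: (x \in V (n * l)) => //; move: hx; rewrite inV => /eqP.
- move=> x; rewrite /f; case hx: (x \in V (n * l)) => //.
  rewrite !in_set -!inV Vfrob // hx Q_frob Fq_pow // Q_Fq //.
Qed.

Lemma T_val F m w lam nu : (0 < m)%N -> (m %| n * l)%N ->
  (forall x, x \in V m -> F x \in Fq) ->
  (forall t x, t \in Fq -> x \in V m -> F (t * x) = t ^+ 2 * F x) ->
  nu \in Fqx -> (forall t, t \in Fq -> t ^+ 2 != nu) ->
  cnt F m 0 = nzeros q c m -> is_lambda q c m w lam ->
  Posz (cnt F m 1) + Posz (cnt F m nu) =
    2 * (Posz (q ^ m.-1) - lam * Posz (q ^ ((m + w) %/ 2).-1)).
Proof.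
move=> m0 hm hF hsc0 hnu nsq h0 [_ hz].
have hsc : forall t a, t \in Fqx -> a \in Fqx -> cnt F m (t ^+ 2 * a) = cnt F m a.
  by move=> t a ht _; apply: cnt_scale.
have E1 := class_sum (h := cnt F m) hnu nsq hsc.
have T1 := cnt_total hF; rewrite sum_Fqx card_V // in T1.
set S1 := (\sum_(a in Fqx) cnt F m a)%N in E1 T1.
have I1 : Posz (cnt F m 0) + Posz S1 = Posz q * Posz (q ^ m.-1).
  by rewrite -PoszD -PoszM -expnS prednK //; congr Posz; exact: T1.
have hq1' : Posz q - 1 = Posz q.-1 by rewrite (subzn (ltnW q_gt1)) subn1.
have I2 : 2 * Posz S1 = (Posz q - 1) * (Posz (cnt F m 1) + Posz (cnt F m nu)).
  by rewrite hq1' -PoszD -!PoszM; congr Posz; exact: E1.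
have I5 : Posz (cnt F m 0) = Posz (q ^ m.-1) + lam * (Posz q - 1) * Posz (q ^ ((m + w) %/ 2).-1).
  by rewrite hq1' h0; exact: hz.
have hq1 : Posz q - 1 != 0 by have := q_gt1; lia.
have hS1 : Posz S1 = Posz q * Posz (q ^ m.-1) - Posz (cnt F m 0) by rewrite -I1; ring.
apply: (mulfI hq1); rewrite -I2 hS1 I5; ring.
Qed.

Lemma w_le m w : (0 < m)%N -> (m %| n * l)%N -> is_w q c m w -> (w <= m)%N.
Proof.
move=> m0 hm hw.
have hle : (q ^ w <= q ^ m)%N.
  rewrite -hw -(card_V m0 hm); apply: subset_leq_card.
  by apply/subsetP => x; rewrite radP => /andP[].
by rewrite leq_exp2l ?q_gt1 in hle.
Qed.


Lemma final (pl : prime l) (hcop : coprime l (2 * p)) (n1 : (1 <= n)%N) wn wnl lamn lamnl :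
  is_w q c n wn -> is_w q c (n * l) wnl ->
  is_lambda q c n wn lamn -> is_lambda q c (n * l) wnl lamnl ->
  lamn != 0 -> lamnl != 0 ->
  (lamn = lamnl * (q ^ ((n * (l - 1) + wnl - wn) %/ 2))%N%:Z %[mod l%:Z])%Z.
Proof.
move=> hwn hwnl hln hlnl ln0 lnl0.
have [nu hnu nsq] := nonsquare.
have hcl2 : coprime l 2 by move: hcop; rewrite coprimeMr => /andP[].
have hclp : coprime l p by move: hcop; rewrite coprimeMr => /andP[].
have l1 := prime_gt1 pl.
have l0 : (l%:R : K) != 0.
  rewrite -(dvdn_pcharf chK); apply/negP => hpl.
  have : (p %| gcdn l p)%N by rewrite dvdn_gcd hpl dvdnn.
  by rewrite (eqP hclp) dvdn1 => /eqP hp1; move: (prime_gt1 pr_p); rewrite hp1.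
have nl0 : (0 < n * l)%N by rewrite muln_gt0 n1 (ltnW l1).
have hn : (n %| n * l)%N by apply: dvdn_mulr.
have hpn := parity n1 hn hwn hln ln0.
have hpnl := parity nl0 (dvdnn _) hwnl hlnl lnl0.
have hFn : forall x, x \in V n -> Q (n * l) x \in Fq.
  by move=> x hx; apply: Q_Fq; apply: V_sub.
have hFnl : forall x, x \in V (n * l) -> Q (n * l) x \in Fq.
  by move=> x hx; apply: Q_Fq.
have hsc : forall m t x, t \in Fq -> x \in V m -> Q (n * l) (t * x) = t ^+ 2 * Q (n * l) x.
  by move=> m t x ht _; apply: Q_scale.
have h0n : cnt (Q (n * l)) n 0 = nzeros q c n.
  apply: eq_card => x; rewrite !in_set -!inV; case hx: (x \in V n) => //=.
  by rewrite Q_nl // mulf_eq0 (negbTE l0).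
have Tn := T_val n1 hn hFn (hsc n) hnu nsq h0n hln.
have Tnl := T_val nl0 (dvdnn _) hFnl (hsc (n * l)) hnu nsq (erefl _) hlnl.
have O1 := orbit_mod 1 pl; have O2 := orbit_mod nu pl.
have chR := pchar_Fp pl.
have natR : forall a b : nat, a = b %[mod l] -> (a%:R : 'F_l) = b%:R.
  by move=> a b h; rewrite -(Fp_nat_mod pl a) h Fp_nat_mod.
have posR : forall a : nat, ((Posz a)%:~R : 'F_l) = a%:R by move=> a; rewrite -pmulrn.
have nodiv : forall a : nat, coprime l a -> (a%:R : 'F_l) != 0.
  move=> a ha; rewrite -(dvdn_pcharf chR); apply/negP => hla.
  have : (l %| gcdn l a)%N by rewrite dvdn_gcd hla dvdnn.
  by rewrite (eqP ha) dvdn1 => /eqP hl1; move: l1; rewrite hl1.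
have two_R : (2%:R : 'F_l) != 0 by apply: nodiv.
have qpow_R : forall j, ((q ^ j)%N%:R : 'F_l) != 0.
  move=> j; apply: nodiv; rewrite -expnM coprimeXr //.
set be := ((n + wn) %/ 2)%N in Tn; set al := ((n * l + wnl) %/ 2)%N in Tnl.
have wnle := w_le n1 hn hwn.
have hE := aux_exp l1 wnle hpn hpnl; rewrite -/be -/al in hE.
set E := ((n * (l - 1) + wnl - wn) %/ 2)%N in hE *.
have hb1 : (0 < be)%N by apply: aux_be.
have ha1 : (0 < al)%N by rewrite hE addn_gt0 hb1.
have TnR := congr1 (fun z : int => (z%:~R : 'F_l)) Tn.
have TnlR := congr1 (fun z : int => (z%:~R : 'F_l)) Tnl.
rewrite /= !(intrD, intrM, intrB, posR) in TnR TnlR.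
rewrite (natR _ _ O1) (natR _ _ O2) TnR !(intrN, intrM, posR) in TnlR.
have two_R' : (1 + 1 : 'F_l) != 0 by exact: two_R.
move/(mulfI two_R'): TnlR => eq1.
have eq2 := congr1 (fun x => (q%:R : 'F_l) * x) eq1.
rewrite /= !mulrDr !mulrN !(mulrCA (q%:R)) -!natrM -!expnS !prednK // in eq2.
have hf : ((q ^ (n * l))%N%:R : 'F_l) = (q ^ n)%N%:R.
  by apply: natR; rewrite expnM; exact: fermat_little.
rewrite hf in eq2; move/addrI: eq2 => /oppr_inj eq3.
rewrite hE expnD natrM mulrA mulrAC in eq3.
move/(mulIf (qpow_R be)): eq3 => eq4.
apply/eqP; rewrite eqz_mod_dvd (dvdz_pcharf chR) intrB intrM posR eq4 subrr //.
Qed.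

End Basic.

Theorem mainTheorem3 (K : finFieldType) (p k : nat) (c : seq K)
    (n l wn wnl : nat) (lamn lamnl : int) :
  prime p -> odd p -> (0 < k)%N -> p \in [pchar K] ->
  (exists e : nat, #|K| = ((p ^ k) ^ (n * l)) ^ e)%N ->
  (forall i, (i < size c)%N -> c`_i ^+ (p ^ k) = c`_i) ->
  (1 <= n)%N -> prime l -> coprime l (2 * p) ->
  is_w (p ^ k) c n wn -> is_w (p ^ k) c (n * l) wnl ->
  is_lambda (p ^ k) c n wn lamn -> is_lambda (p ^ k) c (n * l) wnl lamnl ->
  lamn != 0 -> lamnl != 0 ->
  (lamn = lamnl * ((p ^ k) ^ ((n * (l - 1) + wnl - wn) %/ 2))%N%:Z %[mod l%:Z])%Z.
Proof.
move=> pr_p odd_p k0 chK [e hK] hc n1 pl hcop hwn hwnl hln hlnl ln0 lnl0.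
exact: (final pr_p odd_p k0 chK hc hK pl hcop n1 hwn hwnl hln hlnl ln0 lnl0).
Qed.
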